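(* Let $\bullet\in\{0,L_p,L,1_p,1\}$, $\mathbf{x}_0\in\mathbb{R}^d$, $\mathbf{A}\in C^\bullet_{\mathbf{x}_0}(\mathbb{R}^d,\mathbb{R}^{m\times n})$, $\mu\in(0,\infty)$ and $\nu\in\mathbb{N}\cup\{0\}$. Define $\lambda:\mathbb{R}^d\to(0,\infty]$ by $\lambda^2(\mathbf{x})=\mu^2/|(\mathbf{A}\mathbf{A}^T)(\mathbf{x})|^\nu$ if $|(\mathbf{A}\mathbf{A}^T)(\mathbf{x})|^\nu>0$ and $\lambda^2(\mathbf{x})=\infty$ otherwise. Then the map $\mathbf{x}\mapsto\mathbf{A}(\mathbf{x})^{*(\lambda(\mathbf{x}))}$ belongs to $C^\bullet_{\mathbf{x}_0}(\mathbb{R}^d,\mathbb{R}^{n\times m})$.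
   Context: $|\cdot|$ denotes the determinant, with $0^0=1$. Damped pseudoinverse: $\mathbf{A}^{*(\lambda)}=\mathbf{A}^T(\mathbf{A}\mathbf{A}^T+\lambda^2\mathbf{I}_m)^+$ for $\lambda<\infty$ and $\mathbf{A}^{*(\infty)}=\mathbf{0}$. Regularity classes: $f\in C^\bullet_{x_0}$ means, respectively, ($0$) continuous at $x_0$; ($L_p$) there are $r>0,L\ge0$ with $\|f(x)-f(x_0)\|\le L\|x-x_0\|$ for $\|x-x_0\|\le r$; ($L$) Lipschitz on a neighborhood of $x_0$; ($1_p$) Fréchet differentiable at $x_0$; ($1$) differentiable on a neighborhood of $x_0$ with derivative continuous at $x_0$. *)

(* Defs.v *)
From HB Require Import structures.
From Stdlib Require Import Reals Lra ClassicalEpsilon FunctionalExtensionality.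
From mathcomp Require Import all_boot all_order all_algebra.

Set Implicit Arguments.
Unset Strict Implicit.
Unset Printing Implicit Defensive.

Definition Reqb (x y : R) : bool := if Req_EM_T x y then true else false.

Lemma Reqb_axiom : Equality.axiom Reqb.
Proof. by move=> x y; rewrite /Reqb; case: Req_EM_T => h; constructor. Qed.

HB.instance Definition _ := hasDecEq.Build R Reqb_axiom.

Definition Rfind (P : pred R) (_ : nat) : option R :=
  match excluded_middle_informative (exists x, P x) with
  | left h => Some (proj1_sig (constructive_indefinite_description _ h))
  | right _ => None
  end.

Lemma Rfind_correct P n x : Rfind P n = Some x -> P x.
Proof.
rewrite /Rfind; case: excluded_middle_informative => // h [<-].
exact: proj2_sig (constructive_indefinite_description _ h).
Qed.

Lemma Rfind_complete (P : pred R) : (exists x, P x) -> exists n, Rfind P n.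
Proof.
move=> h; exists 0%N; rewrite /Rfind; case: excluded_middle_informative => //.
Qed.

Lemma Rfind_ext (P Q : pred R) : P =1 Q -> Rfind P =1 Rfind Q.
Proof.
move=> hPQ; have -> : P = Q by apply: functional_extensionality.
by [].
Qed.

HB.instance Definition _ := hasChoice.Build R Rfind_correct Rfind_complete Rfind_ext.

Lemma R_addrA : associative Rplus. Proof. by move=> x y z; rewrite Rplus_assoc. Qed.
Lemma R_addrC : commutative Rplus. Proof. exact: Rplus_comm. Qed.
Lemma R_add0r : left_id (IZR 0) Rplus. Proof. exact: Rplus_0_l. Qed.
Lemma R_addNr : left_inverse (IZR 0) Ropp Rplus. Proof. exact: Rplus_opp_l. Qed.

HB.instance Definition _ := GRing.isZmodule.Build R R_addrA R_addrC R_add0r R_addNr.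

Lemma R_mulrA : associative Rmult. Proof. by move=> x y z; rewrite Rmult_assoc. Qed.
Lemma R_mulrC : commutative Rmult. Proof. exact: Rmult_comm. Qed.
Lemma R_mul1r : left_id (IZR 1) Rmult. Proof. exact: Rmult_1_l. Qed.
Lemma R_mulrDl : left_distributive Rmult Rplus.
Proof. by move=> x y z; rewrite Rmult_plus_distr_r. Qed.
Lemma R_oner_neq0 : (IZR 1) != (IZR 0).
Proof. by apply/eqP; exact: R1_neq_R0. Qed.

HB.instance Definition _ :=
  GRing.Zmodule_isComNzRing.Build R R_mulrA R_mulrC R_mul1r R_mulrDl R_oner_neq0.

Lemma R_mulVf (x : R) : x != IZR 0 -> Rmult (Rinv x) x = IZR 1.
Proof. by move/eqP=> h; rewrite Rinv_l. Qed.
Lemma R_invr0 : Rinv (IZR 0) = IZR 0. Proof. exact: Rinv_0. Qed.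

HB.instance Definition _ := GRing.ComNzRing_isField.Build R R_mulVf R_invr0.

Import GRing.Theory.
Local Open Scope ring_scope.

Definition mnorm (p q : nat) (M : 'M[R]_(p, q)) : R :=
  sqrt (\sum_(i < p) \sum_(j < q) (M i j * M i j))%R.

Inductive reg_class : Type := Reg0 | RegLp | RegL | Reg1p | Reg1.

Definition is_linear_map (d p q : nat) (D : 'cV[R]_d -> 'M[R]_(p, q)) : Prop :=
  forall (a : R) (u v : 'cV[R]_d), D (a *: u + v)%R = (a *: D u + D v)%R.

Definition frechet_at (d p q : nat) (f : 'cV[R]_d -> 'M[R]_(p, q))
  (x : 'cV[R]_d) (D : 'cV[R]_d -> 'M[R]_(p, q)) : Prop :=
  is_linear_map D /\
  forall eps : R, Rlt 0 eps -> exists delta : R, Rlt 0 delta /\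
    forall y : 'cV[R]_d, Rlt (mnorm (y - x)%R) delta ->
      Rle (mnorm (f y - f x - D (y - x))%R) (Rmult eps (mnorm (y - x)%R)).

Definition regular (b : reg_class) (d p q : nat)
  (f : 'cV[R]_d -> 'M[R]_(p, q)) (x0 : 'cV[R]_d) : Prop :=
  match b with
  | Reg0 =>
      forall eps : R, Rlt 0 eps -> exists delta : R, Rlt 0 delta /\
        forall x : 'cV[R]_d, Rlt (mnorm (x - x0)%R) delta ->
          Rlt (mnorm (f x - f x0)%R) eps
  | RegLp =>
      exists r L : R, Rlt 0 r /\ Rle 0 L /\
        forall x : 'cV[R]_d, Rle (mnorm (x - x0)%R) r ->
          Rle (mnorm (f x - f x0)%R) (Rmult L (mnorm (x - x0)%R))
  | RegL =>
      exists r L : R, Rlt 0 r /\ Rle 0 L /\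
        forall x y : 'cV[R]_d, Rlt (mnorm (x - x0)%R) r -> Rlt (mnorm (y - x0)%R) r ->
          Rle (mnorm (f x - f y)%R) (Rmult L (mnorm (x - y)%R))
  | Reg1p =>
      exists D, frechet_at f x0 D
  | Reg1 =>
      exists (r : R) (Df : 'cV[R]_d -> 'cV[R]_d -> 'M[R]_(p, q)), Rlt 0 r /\
        (forall x : 'cV[R]_d, Rlt (mnorm (x - x0)%R) r -> frechet_at f x (Df x)) /\
        (* continuity of x |-> Df x at x0 in operator norm *)
        (forall eps : R, Rlt 0 eps -> exists delta : R, Rlt 0 delta /\
           forall x : 'cV[R]_d, Rlt (mnorm (x - x0)%R) delta ->
             forall h : 'cV[R]_d,
               Rle (mnorm (Df x h - Df x0 h)%R) (Rmult eps (mnorm h)))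
  end.

Definition penrose (p q : nat) (M : 'M[R]_(p, q)) (X : 'M[R]_(q, p)) : Prop :=
  [/\ (M *m X *m M = M)%R, (X *m M *m X = X)%R,
      (M *m X)^T = (M *m X)%R & (X *m M)^T = (X *m M)%R].

(* M^+ : the (unique) matrix satisfying the four Penrose equations *)
Definition pinv (p q : nat) (M : 'M[R]_(p, q)) : 'M[R]_(q, p) :=
  epsilon (inhabits 0%R) (penrose M).

(* A damping parameter lambda in (0, +oo]: Some l is the finite value l,
   None is +oo. *)
Definition damped_pinv (m n : nat) (A : 'M[R]_(m, n)) (lam : option R)
  : 'M[R]_(n, m) :=
  match lam with
  | Some l => (A^T *m pinv (A *m A^T + (Rmult l l)%:M))%R
  | None => 0%R
  end.

(* lambda(x) with lambda^2(x) = mu^2 / |A A^T (x)|^nu if |A A^T(x)|^nu > 0,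
   and +oo otherwise; note x ^+ 0 = 1, matching 0^0 = 1. *)
Definition lam_fun (d m n : nat) (mu : R) (nu : nat)
  (A : 'cV[R]_d -> 'M[R]_(m, n)) (x : 'cV[R]_d) : option R :=
  let D := ((\det (A x *m (A x)^T)) ^+ nu)%R in
  if Rlt_dec 0 D then Some (sqrt (Rdiv (Rmult mu mu) D)) else None.

(* Main.v *)
Require Import Defs.
From HB Require Import structures.
From Stdlib Require Import Reals Lra ClassicalEpsilon FunctionalExtensionality Classical.
From mathcomp Require Import all_boot all_order all_algebra.
Set Implicit Arguments. Unset Strict Implicit. Unset Printing Implicit Defensive.
Import GRing.Theory.
Local Open Scope R_scope.

Lemma addRE (x y : R) : (x + y)%R = x + y. Proof. by []. Qed.
Lemma mulRE (x y : R) : (x * y)%R = x * y. Proof. by []. Qed.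
Lemma oppRE (x : R) : (- x)%R = - x. Proof. by []. Qed.
Lemma subRE (x y : R) : (x - y)%R = x - y. Proof. by []. Qed.
Lemma invRE (x : R) : (x^-1)%R = / x. Proof. by []. Qed.
Lemma zeroRE : (0%R : R) = 0. Proof. by []. Qed.
Lemma oneRE : (1%R : R) = 1. Proof. by []. Qed.
Ltac fixT := repeat match goal with |- context [@fun_of_matrix ?T ?p ?q ?M ?i ?j] =>
   progress change (@fun_of_matrix T p q M i j) with (@fun_of_matrix R p q M i j) end.
Ltac rR := rewrite ?addRE ?mulRE ?oppRE ?subRE ?invRE ?zeroRE ?oneRE; fixT;
  try match goal with |- @eq _ ?a ?b => change (@eq R a b) end.

Lemma sumR_cons (I : Type) (a : I) (r : seq I) (F : I -> R) :
  (\sum_(i <- a :: r) F i)%R = F a + (\sum_(i <- r) F i)%R.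
Proof. by rewrite big_cons. Qed.
Lemma sumR_nil (I : Type) (F : I -> R) : (\sum_(i <- [::]) F i)%R = 0.
Proof. by rewrite big_nil. Qed.

Lemma sum_ge0 (I : Type) (r : seq I) (F : I -> R) :
  (forall i, 0 <= F i) -> 0 <= (\sum_(i <- r) F i)%R.
Proof.
move=> H; apply: (big_ind (fun x => 0 <= x)) => //; first (rR; lra).
by move=> x y hx hy; rR; lra.
Qed.

Lemma sum_le (I : Type) (r : seq I) (F G : I -> R) :
  (forall i, F i <= G i) -> (\sum_(i <- r) F i)%R <= (\sum_(i <- r) G i)%R.
Proof.
move=> H; apply: (big_ind2 (fun x y => x <= y)) => //; first (rR; lra).
by move=> x y z w h1 h2; rR; lra.
Qed.

Lemma sum_abs (I : Type) (r : seq I) (F : I -> R) :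
  Rabs (\sum_(i <- r) F i)%R <= (\sum_(i <- r) Rabs (F i))%R.
Proof.
apply: (big_ind2 (fun x y => Rabs x <= y)) => //; first (rR; rewrite Rabs_R0; lra).
move=> x y z w h1 h2; rR. have := Rabs_triang x z; lra.
move=> i _; lra.
Qed.

Lemma sum_term (I : eqType) (r : seq I) (F : I -> R) i :
  (forall i, 0 <= F i) -> i \in r -> F i <= (\sum_(k <- r) F k)%R.
Proof.
move=> H; elim: r => [|a r IH] //; rewrite in_cons sumR_cons => /orP [/eqP ->|hi].
  have := sum_ge0 r H; rR; lra.
have := IH hi; have := H a; rR; lra.
Qed.

Lemma sum_const_le (I : Type) (r : seq I) (F : I -> R) c :
  (forall i, F i <= c) -> (\sum_(i <- r) F i)%R <= INR (size r) * c.
Proof.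
move=> H; elim: r => [|a r IH]; first by rewrite sumR_nil /=; rR; lra.
rewrite sumR_cons; change (size (a::r)) with (S (size r)); rewrite S_INR. have := H a. rewrite Rmult_plus_distr_r Rmult_1_l. move=> h; rewrite (Rplus_comm (INR _ * c)); apply Rplus_le_compat; [exact h|exact IH].
Qed.

Lemma sumR_mulr (I : Type) (r : seq I) (F : I -> R) c :
  (\sum_(i <- r) (F i * c))%R = (\sum_(i <- r) F i)%R * c.
Proof.
elim: r => [|a r IH]; first by rewrite !sumR_nil; rR; ring.
rewrite !sumR_cons IH; rR; ring.
Qed.

Lemma sumR_mull (I : Type) (r : seq I) (F : I -> R) c :
  (\sum_(i <- r) (c * F i))%R = c * (\sum_(i <- r) F i)%R.
Proof.
elim: r => [|a r IH]; first by rewrite !sumR_nil; rR; ring.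
rewrite !sumR_cons IH; rR; ring.
Qed.

Lemma size_ie n : size (index_enum 'I_n) = n.
Proof. by rewrite /index_enum unlock -enumT size_enum_ord. Qed.

Lemma mnorm_ge0 p q (M : 'M[R]_(p, q)) : 0 <= mnorm M.
Proof. exact: sqrt_pos. Qed.

Lemma sq_ge0 (a : R) : 0 <= (a * a)%R.
Proof. rR; nra. Qed.

Lemma entry_le p q (M : 'M[R]_(p, q)) i j : Rabs (M i j) <= mnorm M.
Proof.
rewrite /mnorm -sqrt_Rsqr_abs; apply: sqrt_le_1_alt; rewrite /Rsqr.
have h1 := @sum_term _ (index_enum 'I_p) (fun k => (\sum_(l < q) (M k l * M k l))%R) i (fun k => sum_ge0 _ (fun l => sq_ge0 (M k l))) (mem_index_enum i).
have h2 := @sum_term _ (index_enum 'I_q) (fun l => (M i l * M i l)%R) j (fun l => sq_ge0 (M i l)) (mem_index_enum j).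
exact: Rle_trans h2 h1.
Qed.

Definition sabs p q (M : 'M[R]_(p, q)) := (\sum_(i < p) \sum_(j < q) Rabs (M i j))%R.

Lemma sabs_ge0 p q (M : 'M[R]_(p, q)) : 0 <= sabs M.
Proof. apply: sum_ge0 => i; apply: sum_ge0 => j; apply: Rabs_pos. Qed.

Lemma entry_le_sabs p q (M : 'M[R]_(p, q)) i j : Rabs (M i j) <= sabs M.
Proof.
have h1 := @sum_term _ (index_enum 'I_p) (fun k => (\sum_(l < q) Rabs (M k l))%R) i (fun k => sum_ge0 _ (fun l => Rabs_pos (M k l))) (mem_index_enum i).
have h2 := @sum_term _ (index_enum 'I_q) (fun l => Rabs (M i l)) j (fun l => Rabs_pos (M i l)) (mem_index_enum j).
exact: Rle_trans h2 h1.
Qed.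

Lemma mnorm_le_sabs p q (M : 'M[R]_(p, q)) : mnorm M <= sabs M.
Proof.
rewrite /mnorm -(sqrt_square (sabs M)); last exact: sabs_ge0.
apply: sqrt_le_1_alt.
apply: Rle_trans (_ : (\sum_(i < p) \sum_(j < q) (Rabs (M i j) * sabs M))%R <= _).
  apply: sum_le => i; apply: sum_le => j.
  have h1 := entry_le_sabs M i j; have h2 := Rabs_pos (M i j).
  rR; have -> : M i j * M i j = Rabs (M i j) * Rabs (M i j).
    by rewrite -Rabs_mult Rabs_right //; nra.
  nra.
rewrite /sabs -sumR_mulr; apply: Req_le; apply: eq_bigr => i _.
by rewrite sumR_mulr.
Qed.

Lemma sabs_bound p q (M : 'M[R]_(p, q)) c :
  (forall i j, Rabs (M i j) <= c) -> sabs M <= INR p * (INR q * c).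
Proof.
move=> H; rewrite /sabs.
have := @sum_const_le _ (index_enum 'I_p) (fun i => \sum_(j<q) Rabs (M i j))%R (INR q * c).
rewrite size_ie; apply=> i.
have := @sum_const_le _ (index_enum 'I_q) (fun j => Rabs (M i j)) c (fun j => H i j).
by rewrite size_ie.
Qed.

Lemma mnorm_bound p q (M : 'M[R]_(p, q)) c :
  (forall i j, Rabs (M i j) <= c) -> mnorm M <= INR p * (INR q * c).
Proof. move=> H; exact: Rle_trans (mnorm_le_sabs M) (sabs_bound H). Qed.

Lemma mnormN p q (M : 'M[R]_(p, q)) : mnorm (- M)%R = mnorm M.
Proof.
rewrite /mnorm; congr sqrt; apply: eq_bigr => i _; apply: eq_bigr => j _.
rewrite !mxE; rR; ring.
Qed.

Lemma mnormB p q (M N : 'M[R]_(p, q)) : mnorm (M - N)%R = mnorm (N - M)%R.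
Proof. by rewrite -mnormN opprB. Qed.

Lemma mnorm0 p q : mnorm (0 : 'M[R]_(p, q))%R = 0.
Proof.
rewrite /mnorm (_ : (\sum_(i < p) \sum_(j < q) _)%R = 0); first exact: sqrt_0.
rewrite big1 // => i _; rewrite big1 // => j _; rewrite !mxE; rR; ring.
Qed.

Lemma mnorm_sub0 p q (M : 'M[R]_(p, q)) : mnorm (M - M)%R = 0.
Proof. by rewrite subrr mnorm0. Qed.

Definition lin d (L : 'cV[R]_d -> R) :=
  forall a u v, L (a *: u + v)%R = a * L u + L v.

Lemma lin0 d (L : 'cV[R]_d -> R) : lin L -> L 0%R = 0.
Proof.
move=> hL; have h := hL 1 0%R 0%R; rewrite scaler0 addr0 Rmult_1_l in h.
apply: (Rplus_eq_reg_l (L 0%R)); rewrite Rplus_0_r; symmetry; exact: h.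
Qed.

Lemma linD d (L : 'cV[R]_d -> R) u v : lin L -> L (u + v)%R = L u + L v.
Proof. by move=> hL; rewrite -{1}(scale1r u) hL; rR; ring. Qed.

Lemma linZ d (L : 'cV[R]_d -> R) a u : lin L -> L (a *: u)%R = a * L u.
Proof. by move=> hL; rewrite -(addr0 (a *: u)%R) hL lin0 //; rR; ring. Qed.

Lemma linN d (L : 'cV[R]_d -> R) u : lin L -> L (- u)%R = - L u.
Proof. by move=> hL; rewrite -scaleN1r linZ //; rR; ring. Qed.

Lemma linB d (L : 'cV[R]_d -> R) u v : lin L -> L (u - v)%R = L u - L v.
Proof. by move=> hL; rewrite linD // linN //; rR; ring. Qed.

Lemma lin_sum d (L : 'cV[R]_d -> R) (I : Type) (r : seq I) (F : I -> 'cV[R]_d) :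
  lin L -> L (\sum_(i <- r) F i)%R = (\sum_(i <- r) L (F i))%R.
Proof.
move=> hL; elim: r => [|a r IH]; first by rewrite big_nil sumR_nil lin0.
by rewrite big_cons sumR_cons linD // IH.
Qed.

Lemma lin_bound d (L : 'cV[R]_d -> R) : lin L ->
  exists C, 0 <= C /\ forall h, Rabs (L h) <= C * mnorm h.
Proof.
move=> hL.
exists (\sum_(i < d) \sum_(j < 1) Rabs (L (delta_mx i j)))%R; split.
  by apply: sum_ge0 => i; apply: sum_ge0 => j; apply: Rabs_pos.
move=> h; rewrite {1}(matrix_sum_delta h) lin_sum //.
apply: Rle_trans (sum_abs _ _) _.
rewrite Rmult_comm -sumR_mull; apply: sum_le => i.
rewrite lin_sum //; apply: Rle_trans (sum_abs _ _) _.
rR; rewrite -sumR_mull; apply: sum_le => j.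
rewrite linZ // Rabs_mult; have := entry_le h i j; have := Rabs_pos (L (delta_mx i j)).
rR; nra.
Qed.

Definition dist d (y x : 'cV[R]_d) := mnorm (y - x)%R.
Lemma dist_ge0 d (y x : 'cV[R]_d) : 0 <= dist y x.
Proof. exact: mnorm_ge0. Qed.
Lemma dist_self d (x : 'cV[R]_d) : dist x x = 0.
Proof. exact: mnorm_sub0. Qed.
Lemma dist_sym d (y x : 'cV[R]_d) : dist y x = dist x y.
Proof. exact: mnormB. Qed.

Definition nb d (x : 'cV[R]_d) (P : 'cV[R]_d -> Prop) :=
  exists del, 0 < del /\ forall y, dist y x < del -> P y.

Lemma nb_and d (x : 'cV[R]_d) P Q : nb x P -> nb x Q -> nb x (fun y => P y /\ Q y).
Proof.
move=> [d1 [h1 H1]] [d2 [h2 H2]]; exists (Rmin d1 d2); split; first by apply: Rmin_pos.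
move=> y hy; have := Rmin_l d1 d2; have := Rmin_r d1 d2.
by split; [apply: H1|apply: H2]; lra.
Qed.

Lemma nb_mono d (x : 'cV[R]_d) (P Q : 'cV[R]_d -> Prop) :
  (forall y, P y -> Q y) -> nb x P -> nb x Q.
Proof. move=> H [e [he He]]; exists e; split => // y hy; apply: H; exact: He. Qed.

Lemma nb_all d (x : 'cV[R]_d) (P : 'cV[R]_d -> Prop) : (forall y, P y) -> nb x P.
Proof. move=> H; exists 1; split; [lra|by move=> y _]. Qed.

Lemma nb_center d (x : 'cV[R]_d) P : nb x P -> P x.
Proof. move=> [e [he He]]; apply: He; rewrite dist_self; lra. Qed.

Lemma nb_seq d (x : 'cV[R]_d) (I : eqType) (s : seq I) (P : I -> 'cV[R]_d -> Prop) :
  (forall i, nb x (P i)) -> nb x (fun y => forall i, i \in s -> P i y).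
Proof.
move=> H; elim: s => [|a s IH]; first by apply: nb_all => y i.
apply: nb_mono (nb_and (H a) IH) => y [h1 h2] i.
by rewrite in_cons => /orP [/eqP -> //|]; exact: h2.
Qed.

Lemma nb_fin d (x : 'cV[R]_d) (I : finType) (P : I -> 'cV[R]_d -> Prop) :
  (forall i, nb x (P i)) -> nb x (fun y => forall i : I, P i y).
Proof. move=> H; apply: nb_mono (nb_seq (enum I) H) => y h i; apply: h; exact: mem_enum. Qed.

Definition nb2 d (x : 'cV[R]_d) (P : 'cV[R]_d -> 'cV[R]_d -> Prop) :=
  exists r, 0 < r /\ forall y z, dist y x < r -> dist z x < r -> P y z.

Lemma nb2_and d (x : 'cV[R]_d) P Q : nb2 x P -> nb2 x Q -> nb2 x (fun y z => P y z /\ Q y z).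
Proof.
move=> [d1 [h1 H1]] [d2 [h2 H2]]; exists (Rmin d1 d2); split; first by apply: Rmin_pos.
move=> y z hy hz; have := Rmin_l d1 d2; have := Rmin_r d1 d2.
by split; [apply: H1|apply: H2]; lra.
Qed.

Lemma nb2_mono d (x : 'cV[R]_d) (P Q : 'cV[R]_d -> 'cV[R]_d -> Prop) :
  (forall y z, P y z -> Q y z) -> nb2 x P -> nb2 x Q.
Proof. move=> H [e [he He]]; exists e; split => // y z hy hz; apply: H; exact: He. Qed.

Lemma nb2_all d (x : 'cV[R]_d) (P : 'cV[R]_d -> 'cV[R]_d -> Prop) : (forall y z, P y z) -> nb2 x P.
Proof. move=> H; exists 1; split; [lra|by move=> y z _]. Qed.

Lemma nb2_seq d (x : 'cV[R]_d) (I : eqType) (s : seq I) P :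
  (forall i : I, nb2 x (P i)) -> nb2 x (fun y z => forall i, i \in s -> P i y z).
Proof.
move=> H; elim: s => [|a s IH]; first by apply: nb2_all => y z i.
apply: nb2_mono (nb2_and (H a) IH) => y z [h1 h2] i.
by rewrite in_cons => /orP [/eqP -> //|]; exact: h2.
Qed.

Lemma nb2_fin d (x : 'cV[R]_d) (I : finType) P :
  (forall i : I, nb2 x (P i)) -> nb2 x (fun y z => forall i : I, P i y z).
Proof. move=> H; apply: nb2_mono (nb2_seq (enum I) H) => y z h i; apply: h; exact: mem_enum. Qed.

Lemma nb2_of_nb d (x : 'cV[R]_d) Q : nb x Q -> nb2 x (fun y z => Q y /\ Q z).
Proof. move=> [e [he He]]; exists e; split => // y z hy hz; split; exact: He. Qed.

Lemma nb2_nb d (x : 'cV[R]_d) P : nb2 x P -> nb x (fun y => P y x).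
Proof. move=> [e [he He]]; exists e; split => // y hy; apply: He => //; rewrite dist_self; lra. Qed.

Definition cz d (x : 'cV[R]_d) (g : 'cV[R]_d -> R) :=
  forall eps, 0 < eps -> nb x (fun y => Rabs (g y) < eps).
Definition bnd d (x : 'cV[R]_d) (g : 'cV[R]_d -> R) :=
  exists M, nb x (fun y => Rabs (g y) <= M).
Definition bo d (x : 'cV[R]_d) (g : 'cV[R]_d -> R) :=
  exists C, 0 <= C /\ nb x (fun y => Rabs (g y) <= C * dist y x).
Definition lo d (x : 'cV[R]_d) (g : 'cV[R]_d -> R) :=
  forall eps, 0 < eps -> nb x (fun y => Rabs (g y) <= eps * dist y x).

Lemma cz_le d (x : 'cV[R]_d) g h :
  nb x (fun y => Rabs (g y) <= Rabs (h y)) -> cz x h -> cz x g.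
Proof.
move=> H1 H2 e he; apply: nb_mono (nb_and H1 (H2 e he)) => y [h1 h2]; lra.
Qed.

Lemma cz_add d (x : 'cV[R]_d) g h : cz x g -> cz x h -> cz x (fun y => g y + h y).
Proof.
move=> H1 H2 e he.
apply: nb_mono (nb_and (H1 (e/2) ltac:(lra)) (H2 (e/2) ltac:(lra))) => y [h1 h2].
have := Rabs_triang (g y) (h y); lra.
Qed.

Lemma cz_bnd d (x : 'cV[R]_d) g : cz x g -> bnd x g.
Proof. move=> H; exists 1; apply: nb_mono (H 1 ltac:(lra)) => y; lra. Qed.

Lemma bnd_pos d (x : 'cV[R]_d) g : bnd x g -> exists M, 0 < M /\ nb x (fun y => Rabs (g y) <= M).
Proof.
move=> [M HM]; exists (Rabs M + 1); split; first by have := Rabs_pos M; lra.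
apply: nb_mono HM => y; have := Rle_abs M; lra.
Qed.

Lemma cz_mulb d (x : 'cV[R]_d) g h : cz x g -> bnd x h -> cz x (fun y => g y * h y).
Proof.
move=> H1 /bnd_pos [M [hM H2]] e he.
have he' : 0 < e / M by apply: Rdiv_lt_0_compat.
apply: nb_mono (nb_and (H1 _ he') H2) => y [h1 h2].
rewrite Rabs_mult.
have -> : e = (e / M) * M by field; lra.
have := Rabs_pos (g y); have := Rabs_pos (h y); nra.
Qed.

Lemma bnd_const d (x : 'cV[R]_d) c : bnd x (fun _ => c).
Proof. by exists (Rabs c); apply: nb_all => y; lra. Qed.

Lemma bnd_add d (x : 'cV[R]_d) g h : bnd x g -> bnd x h -> bnd x (fun y => g y + h y).
Proof.
move=> [M1 H1] [M2 H2]; exists (M1 + M2); apply: nb_mono (nb_and H1 H2) => y [h1 h2].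
have := Rabs_triang (g y) (h y); lra.
Qed.

Lemma bnd_mul d (x : 'cV[R]_d) g h : bnd x g -> bnd x h -> bnd x (fun y => g y * h y).
Proof.
move=> /bnd_pos [M1 [p1 H1]] /bnd_pos [M2 [p2 H2]]; exists (M1 * M2).
apply: nb_mono (nb_and H1 H2) => y [h1 h2]; rewrite Rabs_mult.
have := Rabs_pos (g y); have := Rabs_pos (h y); nra.
Qed.

Lemma bnd_le d (x : 'cV[R]_d) g h :
  nb x (fun y => Rabs (g y) <= Rabs (h y)) -> bnd x h -> bnd x g.
Proof. move=> H1 [M H2]; exists M; apply: nb_mono (nb_and H1 H2) => y [h1 h2]; lra. Qed.

Lemma cz_away d (x : 'cV[R]_d) u : cz x (fun y => u y - u x) -> u x <> 0 ->
  nb x (fun y => Rabs (u x) / 2 <= Rabs (u y)).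
Proof.
move=> H hu; have hp : 0 < Rabs (u x) / 2 by have := Rabs_pos_lt _ hu; lra.
apply: nb_mono (H _ hp) => y h.
have := Rabs_triang_inv (u x) (u y); rewrite Rabs_minus_sym; lra.
Qed.

Lemma bnd_inv d (x : 'cV[R]_d) u : cz x (fun y => u y - u x) -> u x <> 0 ->
  bnd x (fun y => / u y).
Proof.
move=> H hu; have hp := Rabs_pos_lt _ hu.
exists (2 / Rabs (u x)); apply: nb_mono (cz_away H hu) => y h.
have hy : 0 < Rabs (u y) by lra.
rewrite Rabs_inv; apply: (Rmult_le_reg_r (Rabs (u y))) => //.
rewrite Rinv_l; last lra.
apply: (Rmult_le_reg_r (Rabs (u x))) => //.
have -> : 2 / Rabs (u x) * Rabs (u y) * Rabs (u x) = 2 * Rabs (u y) by field; lra.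
lra.
Qed.

Lemma bo_le d (x : 'cV[R]_d) g h :
  nb x (fun y => Rabs (g y) <= Rabs (h y)) -> bo x h -> bo x g.
Proof. move=> H1 [C [hC H2]]; exists C; split => //; apply: nb_mono (nb_and H1 H2) => y [h1 h2]; lra. Qed.

Lemma bo_add d (x : 'cV[R]_d) g h : bo x g -> bo x h -> bo x (fun y => g y + h y).
Proof.
move=> [C1 [p1 H1]] [C2 [p2 H2]]; exists (C1 + C2); split; first lra.
apply: nb_mono (nb_and H1 H2) => y [h1 h2].
have := Rabs_triang (g y) (h y); lra.
Qed.

Lemma bo_mulb d (x : 'cV[R]_d) g h : bo x g -> bnd x h -> bo x (fun y => g y * h y).
Proof.
move=> [C [pC H1]] /bnd_pos [M [pM H2]]; exists (C * M); split; first nra.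
apply: nb_mono (nb_and H1 H2) => y [h1 h2]; rewrite Rabs_mult.
have := Rabs_pos (g y); have := Rabs_pos (h y); have := dist_ge0 y x; nra.
Qed.

Lemma bo_cz d (x : 'cV[R]_d) g : bo x g -> cz x g.
Proof.
move=> [C [pC [e [he He]]]] eps heps.
exists (Rmin e (eps / (C + 1))); split.
  by apply: Rmin_pos => //; apply: Rdiv_lt_0_compat; lra.
move=> y hy; have := Rmin_l e (eps / (C + 1)); have := Rmin_r e (eps / (C + 1)) => h1 h2.
have h3 := He y ltac:(lra); have h4 := dist_ge0 y x.
have h5 : (C + 1) * (eps / (C + 1)) = eps by field; lra.
have ht : 0 < eps / (C + 1) by apply: Rdiv_lt_0_compat; lra.
have h6 : C * dist y x <= C * (eps / (C + 1)).
  by apply: Rmult_le_compat_l => //; lra.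
lra.
Qed.

Lemma lo_le d (x : 'cV[R]_d) g h :
  nb x (fun y => Rabs (g y) <= Rabs (h y)) -> lo x h -> lo x g.
Proof. move=> H1 H2 e he; apply: nb_mono (nb_and H1 (H2 e he)) => y [h1 h2]; lra. Qed.

Lemma lo_add d (x : 'cV[R]_d) g h : lo x g -> lo x h -> lo x (fun y => g y + h y).
Proof.
move=> H1 H2 e he.
apply: nb_mono (nb_and (H1 (e/2) ltac:(lra)) (H2 (e/2) ltac:(lra))) => y [h1 h2].
have := Rabs_triang (g y) (h y); lra.
Qed.

Lemma lo_mulb d (x : 'cV[R]_d) g h : lo x g -> bnd x h -> lo x (fun y => g y * h y).
Proof.
move=> H1 /bnd_pos [M [pM H2]] e he.
have he' : 0 < e / M by apply: Rdiv_lt_0_compat.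
apply: nb_mono (nb_and (H1 _ he') H2) => y [h1 h2]; rewrite Rabs_mult.
have h5 : e / M * M = e by field; lra.
have := Rabs_pos (g y); have := Rabs_pos (h y); have := dist_ge0 y x; nra.
Qed.

Lemma lo_bo d (x : 'cV[R]_d) g : lo x g -> bo x g.
Proof. move=> H; exists 1; split; [lra|exact: (H 1 Rlt_0_1)]. Qed.

Lemma bo_cz_lo d (x : 'cV[R]_d) g h : bo x g -> cz x h -> lo x (fun y => g y * h y).
Proof.
move=> [C [pC H1]] H2 e he.
have he' : 0 < e / (C + 1) by apply: Rdiv_lt_0_compat; lra.
apply: nb_mono (nb_and H1 (H2 _ he')) => y [h1 h2]; rewrite Rabs_mult.
have h5 : (C + 1) * (e / (C + 1)) = e by field; lra.
have := Rabs_pos (g y); have := Rabs_pos (h y); have := dist_ge0 y x; nra.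
Qed.

Lemma bo_lin d (x : 'cV[R]_d) (L : 'cV[R]_d -> R) : lin L -> bo x (fun y => L (y - x)%R).
Proof.
move=> /lin_bound [C [pC HC]]; exists C; split => //; apply: nb_all => y; exact: HC.
Qed.

Lemma cz_eq d (x : 'cV[R]_d) g h : (forall y, g y = h y) -> cz x h -> cz x g.
Proof. move=> H; apply: cz_le; apply: nb_all => y; rewrite H; lra. Qed.
Lemma bo_eq d (x : 'cV[R]_d) g h : (forall y, g y = h y) -> bo x h -> bo x g.
Proof. move=> H; apply: bo_le; apply: nb_all => y; rewrite H; lra. Qed.
Lemma lo_eq d (x : 'cV[R]_d) g h : (forall y, g y = h y) -> lo x h -> lo x g.
Proof. move=> H; apply: lo_le; apply: nb_all => y; rewrite H; lra. Qed.
Lemma bnd_eq d (x : 'cV[R]_d) g h : (forall y, g y = h y) -> bnd x h -> bnd x g.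
Proof. move=> H; apply: bnd_le; apply: nb_all => y; rewrite H; lra. Qed.

Lemma cz_opp d (x : 'cV[R]_d) g : cz x g -> cz x (fun y => - g y).
Proof. apply: cz_le; apply: nb_all => y; rewrite Rabs_Ropp; lra. Qed.

Lemma cz_bnd_sh d (x : 'cV[R]_d) u : cz x (fun y => u y - u x) -> bnd x u.
Proof.
move=> H; apply: (@bnd_eq _ _ _ (fun y => (u y - u x) + u x)); first by move=> y; ring.
apply: bnd_add; [exact: cz_bnd|exact: bnd_const].
Qed.

Definition inc d (y x : 'cV[R]_d) := (y - x)%R.

Lemma bo_lin' d (x : 'cV[R]_d) (L : 'cV[R]_d -> R) : lin L -> bo x (fun y => L (inc y x)).
Proof. exact: bo_lin. Qed.

Definition ocz d (x : 'cV[R]_d) (G : 'cV[R]_d -> 'cV[R]_d -> R) :=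
  forall eps, 0 < eps -> nb x (fun y => forall h, Rabs (G y h) <= eps * mnorm h).

Lemma ocz_eq d (x : 'cV[R]_d) G G' : (forall y h, G y h = G' y h) -> ocz x G' -> ocz x G.
Proof. move=> H H' e he; apply: nb_mono (H' e he) => y h k; rewrite H; exact: h. Qed.

Lemma ocz_add d (x : 'cV[R]_d) G G' : ocz x G -> ocz x G' -> ocz x (fun y h => G y h + G' y h).
Proof.
move=> H1 H2 e he.
apply: nb_mono (nb_and (H1 (e/2) ltac:(lra)) (H2 (e/2) ltac:(lra))) => y [h1 h2] h.
have := h1 h; have := h2 h; have := Rabs_triang (G y h) (G' y h); lra.
Qed.

Lemma ocz_mulb d (x : 'cV[R]_d) G g : ocz x G -> bnd x g -> ocz x (fun y h => g y * G y h).
Proof.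
move=> H1 /bnd_pos [M [pM H2]] e he.
have he' : 0 < e / M by apply: Rdiv_lt_0_compat.
apply: nb_mono (nb_and (H1 _ he') H2) => y [h1 h2] h; rewrite Rabs_mult.
have h5 : e / M * M = e by field; lra.
have := h1 h; have := Rabs_pos (g y); have := Rabs_pos (G y h); have := mnorm_ge0 h; nra.
Qed.

Lemma ocz_czlin d (x : 'cV[R]_d) g (L : 'cV[R]_d -> R) : cz x g -> lin L ->
  ocz x (fun y h => g y * L h).
Proof.
move=> H /lin_bound [C [pC HC]] e he.
have he' : 0 < e / (C + 1) by apply: Rdiv_lt_0_compat; lra.
apply: nb_mono (H _ he') => y h1 h; rewrite Rabs_mult.
have h5 : (C + 1) * (e / (C + 1)) = e by field; lra.
have := HC h; have := Rabs_pos (g y); have := Rabs_pos (L h); have := mnorm_ge0 h; nra.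
Qed.

Definition sfr d (u : 'cV[R]_d -> R) (x : 'cV[R]_d) (L : 'cV[R]_d -> R) :=
  lin L /\ lo x (fun y => u y - u x - L (inc y x)).

Definition sreg (b : reg_class) d (u : 'cV[R]_d -> R) (x0 : 'cV[R]_d) : Prop :=
  match b with
  | Reg0 => cz x0 (fun x => u x - u x0)
  | RegLp => bo x0 (fun x => u x - u x0)
  | RegL => exists L, 0 <= L /\ nb2 x0 (fun x y => Rabs (u x - u y) <= L * dist x y)
  | Reg1p => exists L, sfr u x0 L
  | Reg1 => exists Du, nb x0 (fun x => sfr u x (Du x)) /\
                       ocz x0 (fun x h => Du x h - Du x0 h)
  end.

Lemma sfr_bo d (u : 'cV[R]_d -> R) x L : sfr u x L -> bo x (fun y => u y - u x).
Proof.
move=> [hL H]; apply: (@bo_eq _ _ _ (fun y => (u y - u x - L (inc y x)) + L (inc y x))).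
  by move=> y; ring.
by apply: bo_add; [exact: lo_bo|exact: bo_lin'].
Qed.

Lemma sreg_cz b d (u : 'cV[R]_d -> R) x0 : sreg b u x0 -> cz x0 (fun x => u x - u x0).
Proof.
case: b => /=.
- done.
- exact: bo_cz.
- move=> [L [pL H]]; apply: bo_cz; exists L; split => //.
  by apply: nb_mono (nb2_nb H) => y; rewrite dist_sym.
- by move=> [L H]; apply: bo_cz; exact: sfr_bo H.
- by move=> [Du [H _]]; apply: bo_cz; exact: sfr_bo (nb_center H).
Qed.

Lemma sfr_const d (x : 'cV[R]_d) c : sfr (fun _ => c) x (fun _ => 0).
Proof.
split; first by move=> a u v; ring.
by move=> e he; apply: nb_all => y; rewrite (_ : c - c - 0 = 0); [rewrite Rabs_R0; have := dist_ge0 y x; nra|ring].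
Qed.

Lemma sfr_add d (u v : 'cV[R]_d -> R) x Lu Lv : sfr u x Lu -> sfr v x Lv ->
  sfr (fun y => u y + v y) x (fun h => Lu h + Lv h).
Proof.
move=> [hu Hu] [hv Hv]; split; first by move=> a p q; rewrite hu hv; ring.
apply: (@lo_eq _ _ _ (fun y => (u y - u x - Lu (inc y x)) + (v y - v x - Lv (inc y x)))).
  by move=> y; ring.
exact: lo_add.
Qed.

Lemma sfr_mul d (u v : 'cV[R]_d -> R) x Lu Lv : sfr u x Lu -> sfr v x Lv ->
  sfr (fun y => u y * v y) x (fun h => u x * Lv h + v x * Lu h).
Proof.
move=> hU hV; have Bu := sfr_bo hU; have Bv := sfr_bo hV.
move: hU hV => [hu Hu] [hv Hv]; split; first by move=> a p q; rewrite hu hv; ring.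
apply: (@lo_eq _ _ _ (fun y => ((v y - v x - Lv (inc y x)) * u x
   + (u y - u x - Lu (inc y x)) * v x) + (u y - u x) * (v y - v x))).
  by move=> y; ring.
apply: lo_add; first by apply: lo_add; apply: lo_mulb => //; exact: bnd_const.
exact: bo_cz_lo Bu (bo_cz Bv).
Qed.

Lemma sfr_inv d (u : 'cV[R]_d -> R) x Lu : sfr u x Lu -> u x <> 0 ->
  sfr (fun y => / u y) x (fun h => - Lu h * / (u x * u x)).
Proof.
move=> hU hx; have Bu := sfr_bo hU; have Cu := bo_cz Bu.
move: hU => [hu Hu]; split; first by move=> a p q; rewrite hu; ring.
apply: lo_le (_ : lo x (fun y => ((u y - u x - Lu (inc y x)) * (- u x)
    + Lu (inc y x) * (u y - u x)) * (/ (u x * u x) * / u y))).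
  apply: nb_mono (cz_away Cu hx) => y hy.
  have hy' : u y <> 0 by move=> e; rewrite e Rabs_R0 in hy; have := Rabs_pos_lt _ hx; lra.
  apply: Req_le; congr Rabs; field; tauto.
apply: lo_mulb; last by apply: bnd_mul; [exact: bnd_const|exact: bnd_inv].
apply: lo_add; first by apply: lo_mulb => //; exact: bnd_const.
exact: bo_cz_lo (bo_lin' x hu) Cu.
Qed.

Lemma prodLip (a a' b b' La Lb Ma Mb t : R) :
  Rabs (a - a') <= La * t -> Rabs (b - b') <= Lb * t -> Rabs b <= Mb -> Rabs a' <= Ma ->
  0 <= La -> 0 <= Lb -> 0 <= t ->
  Rabs (a * b - a' * b') <= (La * Mb + Ma * Lb) * t.
Proof.
move=> h1 h2 h3 h4 p1 p2 p3.
rewrite (_ : a * b - a' * b' = (a - a') * b + a' * (b - b')); last ring.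
apply: Rle_trans (Rabs_triang _ _) _; rewrite !Rabs_mult.
have := Rabs_pos (a - a'); have := Rabs_pos b; have := Rabs_pos a'; have := Rabs_pos (b - b').
move=> q1 q2 q3 q4.
have e1 : Rabs (a - a') * Rabs b <= (La * t) * Mb by apply: Rmult_le_compat.
have e2 : Rabs a' * Rabs (b - b') <= Ma * (Lb * t) by apply: Rmult_le_compat.
lra.
Qed.

Lemma invLip (a a' L m t : R) :
  Rabs (a - a') <= L * t -> m <= Rabs a -> m <= Rabs a' -> 0 < m -> 0 <= L -> 0 <= t ->
  Rabs (/ a - / a') <= (L / (m * m)) * t.
Proof.
move=> h1 h2 h3 hm pL pt.
have ha : a <> 0 by move=> e; rewrite e Rabs_R0 in h2; lra.
have ha' : a' <> 0 by move=> e; rewrite e Rabs_R0 in h3; lra.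
rewrite (_ : / a - / a' = (a' - a) * / (a * a')); last by field.
rewrite Rabs_mult Rabs_minus_sym Rabs_inv Rabs_mult.
have hmm : m * m <= Rabs a * Rabs a' by apply: Rmult_le_compat; lra.
have p : 0 < Rabs a * Rabs a' by nra.
apply: (Rmult_le_reg_r (Rabs a * Rabs a')) => //.
rewrite Rmult_assoc Rinv_l; last lra.
have -> : L / (m * m) * t * (Rabs a * Rabs a') = (L * t) * ((Rabs a * Rabs a') / (m * m)) by field; lra.
have : 1 <= Rabs a * Rabs a' / (m * m).
  apply: (Rmult_le_reg_r (m * m)); first nra.
  by rewrite Rmult_1_l /Rdiv Rmult_assoc Rinv_l ?Rmult_1_r; nra.
have := Rabs_pos (a - a'); nra.
Qed.

Lemma sreg_const b d (x0 : 'cV[R]_d) c : sreg b (fun _ => c) x0.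
Proof.
case: b => /=.
- by move=> e he; apply: nb_all => y; rewrite Rminus_diag Rabs_R0.
- exists 0; split; [lra|]; apply: nb_all => y; rewrite Rminus_diag Rabs_R0; lra.
- exists 0; split; [lra|]; apply: nb2_all => y z; rewrite Rminus_diag Rabs_R0; lra.
- by exists (fun _ => 0); exact: sfr_const.
- exists (fun _ _ => 0); split; first by apply: nb_all => y; exact: sfr_const.
  move=> e he; apply: nb_all => y h; rewrite Rminus_diag Rabs_R0.
  have := mnorm_ge0 h; nra.
Qed.

Lemma sreg_add b d (u v : 'cV[R]_d -> R) x0 : sreg b u x0 -> sreg b v x0 ->
  sreg b (fun x => u x + v x) x0.
Proof.
case: b => /=.
- move=> H1 H2; apply: (@cz_eq _ _ _ (fun x => (u x - u x0) + (v x - v x0))).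
    by move=> y; ring.
  exact: cz_add.
- move=> H1 H2; apply: (@bo_eq _ _ _ (fun x => (u x - u x0) + (v x - v x0))).
    by move=> y; ring.
  exact: bo_add.
- move=> [L1 [p1 H1]] [L2 [p2 H2]]; exists (L1 + L2); split; first lra.
  apply: nb2_mono (nb2_and H1 H2) => y z [h1 h2].
  rewrite (_ : u y + v y - (u z + v z) = (u y - u z) + (v y - v z)); last ring.
  have := Rabs_triang (u y - u z) (v y - v z); lra.
- move=> [L1 H1] [L2 H2]; exists (fun h => L1 h + L2 h); exact: sfr_add.
- move=> [D1 [H1 C1]] [D2 [H2 C2]]; exists (fun x h => D1 x h + D2 x h); split.
    by apply: nb_mono (nb_and H1 H2) => y [h1 h2]; exact: sfr_add.
  apply: (@ocz_eq _ _ _ (fun x h => (D1 x h - D1 x0 h) + (D2 x h - D2 x0 h))).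
    by move=> y h; ring.
  exact: ocz_add.
Qed.

Lemma sreg_mul b d (u v : 'cV[R]_d -> R) x0 : sreg b u x0 -> sreg b v x0 ->
  sreg b (fun x => u x * v x) x0.
Proof.
move=> H1 H2; have Cu := sreg_cz H1; have Cv := sreg_cz H2.
have Bu := cz_bnd_sh Cu; have Bv := cz_bnd_sh Cv.
move: H1 H2; case: b => /=.
- move=> _ _; apply: (@cz_eq _ _ _ (fun x => (u x - u x0) * v x + (v x - v x0) * u x0)).
    by move=> y; ring.
  apply: cz_add; apply: cz_mulb => //; exact: bnd_const.
- move=> H1 H2; apply: (@bo_eq _ _ _ (fun x => (u x - u x0) * v x + (v x - v x0) * u x0)).
    by move=> y; ring.
  apply: bo_add; apply: bo_mulb => //; exact: bnd_const.
- move=> [L1 [p1 H1]] [L2 [p2 H2]].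
  move: Bu Bv => /bnd_pos [Mu [pu Bu]] /bnd_pos [Mv [pv Bv]].
  exists (L1 * Mv + Mu * L2); split; first nra.
  apply: nb2_mono (nb2_and (nb2_and H1 H2) (nb2_and (nb2_of_nb Bu) (nb2_of_nb Bv))).
  move=> y z [[h1 h2] [[h3 h4] [h5 h6]]].
  by apply: prodLip => //; exact: dist_ge0.
- move=> [L1 H1] [L2 H2]; eexists; exact: sfr_mul H1 H2.
- move=> [D1 [H1 C1]] [D2 [H2 C2]]; exists (fun x h => u x * D2 x h + v x * D1 x h); split.
    by apply: nb_mono (nb_and H1 H2) => y [h1 h2]; exact: sfr_mul.
  have [l1 _] := nb_center H1; have [l2 _] := nb_center H2.
  apply: (@ocz_eq _ _ _ (fun x h => (u x * (D2 x h - D2 x0 h) + (u x - u x0) * D2 x0 h)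
      + (v x * (D1 x h - D1 x0 h) + (v x - v x0) * D1 x0 h))).
    by move=> y h; ring.
  apply: ocz_add; apply: ocz_add.
  - exact: (@ocz_mulb _ x0 (fun x h => D2 x h - D2 x0 h) u C2 Bu).
  - exact: (@ocz_czlin _ x0 (fun x => u x - u x0) (D2 x0) Cu l2).
  - exact: (@ocz_mulb _ x0 (fun x h => D1 x h - D1 x0 h) v C1 Bv).
  - exact: (@ocz_czlin _ x0 (fun x => v x - v x0) (D1 x0) Cv l1).
Qed.

Lemma nb_nz d (u : 'cV[R]_d -> R) x0 : cz x0 (fun x => u x - u x0) -> u x0 <> 0 ->
  nb x0 (fun x => u x <> 0).
Proof.
move=> C hx; apply: nb_mono (cz_away C hx) => y hy e.
rewrite e Rabs_R0 in hy; have := Rabs_pos_lt _ hx; lra.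
Qed.

Lemma bnd_inv' d (u : 'cV[R]_d -> R) x0 : cz x0 (fun x => u x - u x0) -> u x0 <> 0 ->
  bnd x0 (fun x => / u x * (- / u x0)).
Proof. move=> C hx; apply: bnd_mul; [exact: bnd_inv|exact: bnd_const]. Qed.

Lemma inv_id (a b : R) : a <> 0 -> b <> 0 -> / a - / b = (a - b) * (/ a * (- / b)).
Proof. move=> ha hb; field; tauto. Qed.

Lemma sreg_inv0 d (u : 'cV[R]_d -> R) x0 : sreg Reg0 u x0 -> u x0 <> 0 ->
  sreg Reg0 (fun x => / u x) x0.
Proof.
move=> /= C hx.
apply: cz_le (_ : cz x0 (fun x => (u x - u x0) * (/ u x * (- / u x0)))).
  apply: nb_mono (nb_nz C hx) => y hy; rewrite inv_id //; lra.
apply: cz_mulb => //; exact: bnd_inv'.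
Qed.

Lemma sreg_inv b d (u : 'cV[R]_d -> R) x0 : sreg b u x0 -> u x0 <> 0 ->
  sreg b (fun x => / u x) x0.
Proof.
move=> H hx; have C := sreg_cz H.
move: H; case: b => /=.
- by move=> _; exact: sreg_inv0.
- move=> H; apply: bo_le (_ : bo x0 (fun x => (u x - u x0) * (/ u x * (- / u x0)))).
    apply: nb_mono (nb_nz C hx) => y hy; rewrite inv_id //; lra.
  apply: bo_mulb => //; exact: bnd_inv'.
- move=> [L [pL H]]; set m := Rabs (u x0) / 2.
  have pm : 0 < m by have := Rabs_pos_lt _ hx; rewrite /m; lra.
  exists (L / (m * m)); split.
    by apply: Rmult_le_pos => //; apply: Rlt_le; apply: Rinv_0_lt_compat; nra.
  apply: nb2_mono (nb2_and H (nb2_of_nb (cz_away C hx))) => y z [h1 [h2 h3]].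
  by apply: invLip => //; exact: dist_ge0.
- by move=> [L H]; eexists; exact: (sfr_inv H hx).
- move=> [D [H1 C1]].
  exists (fun x h => - D x h * / (u x * u x)); split.
    by apply: nb_mono (nb_and H1 (nb_nz C hx)) => y [h1 h2]; exact: sfr_inv.
  have [l1 _] := nb_center H1.
  have Cw : cz x0 (fun x => / (u x * u x) - / (u x0 * u x0)).
    exact: (@sreg_inv0 _ (fun x => u x * u x) x0 (@sreg_mul Reg0 _ u u x0 C C) ltac:(apply: Rmult_integral_contrapositive; tauto)).
  apply: (@ocz_eq _ _ _ (fun x h => (- / (u x * u x)) * (D x h - D x0 h)
       + (- (/ (u x * u x) - / (u x0 * u x0))) * D x0 h)).
    by move=> y h; ring.
  apply: ocz_add.
  - apply: ocz_mulb => //.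
    apply: bnd_le (_ : bnd x0 (fun x => / u x * / u x * (-1))).
      apply: nb_mono (nb_nz C hx) => y hy; rewrite Rinv_mult; apply: Req_le; congr Rabs; ring.
    apply: bnd_mul; last exact: bnd_const.
    apply: bnd_mul; exact: bnd_inv.
  - exact: (@ocz_czlin _ x0 (fun x => - (/ (u x * u x) - / (u x0 * u x0))) (D x0) (cz_opp Cw) l1).
Qed.

Lemma sreg_ext b d (u v : 'cV[R]_d -> R) x0 : (forall x, u x = v x) -> sreg b v x0 -> sreg b u x0.
Proof. by move=> H; rewrite (functional_extensionality u v H). Qed.

Lemma sreg_mulR b d (u v : 'cV[R]_d -> R) x0 : sreg b u x0 -> sreg b v x0 ->
  sreg b (fun x => (u x * v x)%R) x0.
Proof. exact: sreg_mul. Qed.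

Lemma sreg_addR b d (u v : 'cV[R]_d -> R) x0 : sreg b u x0 -> sreg b v x0 ->
  sreg b (fun x => (u x + v x)%R) x0.
Proof. exact: sreg_add. Qed.

Lemma sreg_invR b d (u : 'cV[R]_d -> R) x0 : sreg b u x0 -> u x0 <> 0 ->
  sreg b (fun x => (u x)^-1%R) x0.
Proof. exact: sreg_inv. Qed.

Lemma sreg_sum b d (I : Type) (r : seq I) (F : I -> 'cV[R]_d -> R) x0 :
  (forall i, sreg b (F i) x0) -> sreg b (fun x => (\sum_(i <- r) F i x)%R) x0.
Proof.
move=> H; elim: r => [|a r IH].
  by apply: (@sreg_ext _ _ _ (fun _ => 0)) => [x|]; [rewrite big_nil|exact: sreg_const].
apply: (@sreg_ext _ _ _ (fun x => F a x + (\sum_(i <- r) F i x)%R)).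
  by move=> x; rewrite big_cons.
exact: sreg_add.
Qed.

Lemma sreg_prod b d (I : Type) (r : seq I) (F : I -> 'cV[R]_d -> R) x0 :
  (forall i, sreg b (F i) x0) -> sreg b (fun x => (\prod_(i <- r) F i x)%R) x0.
Proof.
move=> H; elim: r => [|a r IH].
  by apply: (@sreg_ext _ _ _ (fun _ => 1)) => [x|]; [rewrite big_nil|exact: sreg_const].
apply: (@sreg_ext _ _ _ (fun x => F a x * (\prod_(i <- r) F i x)%R)).
  by move=> x; rewrite big_cons.
exact: sreg_mul.
Qed.

Lemma sreg_exp b d (u : 'cV[R]_d -> R) x0 k : sreg b u x0 ->
  sreg b (fun x => (u x ^+ k)%R) x0.
Proof.
move=> H; elim: k => [|k IH].
  by apply: (@sreg_ext _ _ _ (fun _ => 1)) => [x|]; [rewrite expr0|exact: sreg_const].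
apply: (@sreg_ext _ _ _ (fun x => u x * (u x ^+ k)%R)); first by move=> x; rewrite exprS.
exact: sreg_mul.
Qed.

Definition mreg b d p q (F : 'cV[R]_d -> 'M[R]_(p, q)) x0 :=
  forall i j, sreg b (fun x => F x i j) x0.

Lemma mreg_const b d p q (M : 'M[R]_(p, q)) (x0 : 'cV[R]_d) : mreg b (fun _ => M) x0.
Proof. move=> i j; exact: sreg_const. Qed.

Lemma mreg_add b d p q (F G : 'cV[R]_d -> 'M[R]_(p, q)) x0 :
  mreg b F x0 -> mreg b G x0 -> mreg b (fun x => F x + G x)%R x0.
Proof.
move=> H1 H2 i j; apply: (@sreg_ext _ _ _ (fun x => F x i j + G x i j)).
  by move=> x; rewrite mxE.
exact: sreg_add.
Qed.

Lemma mreg_mul b d p q r (F : 'cV[R]_d -> 'M[R]_(p, q)) (G : 'cV[R]_d -> 'M[R]_(q, r)) x0 :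
  mreg b F x0 -> mreg b G x0 -> mreg b (fun x => F x *m G x)%R x0.
Proof.
move=> H1 H2 i j; apply: (@sreg_ext _ _ _ (fun x => (\sum_k (F x i k * G x k j))%R)).
  by move=> x; rewrite mxE.
apply: sreg_sum => k; exact: sreg_mulR.
Qed.

Lemma mreg_tr b d p q (F : 'cV[R]_d -> 'M[R]_(p, q)) x0 :
  mreg b F x0 -> mreg b (fun x => (F x)^T)%R x0.
Proof.
move=> H i j; apply: (@sreg_ext _ _ _ (fun x => F x j i)); first by move=> x; rewrite mxE.
exact: H.
Qed.

Lemma mreg_scale b d p q (s : 'cV[R]_d -> R) (F : 'cV[R]_d -> 'M[R]_(p, q)) x0 :
  sreg b s x0 -> mreg b F x0 -> mreg b (fun x => s x *: F x)%R x0.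
Proof.
move=> H1 H2 i j; apply: (@sreg_ext _ _ _ (fun x => (s x * F x i j)%R)).
  by move=> x; rewrite mxE.
exact: sreg_mulR.
Qed.

Lemma sreg_det b d n (F : 'cV[R]_d -> 'M[R]_n) x0 :
  mreg b F x0 -> sreg b (fun x => \det (F x))%R x0.
Proof.
move=> H; rewrite /determinant; apply: sreg_sum => s.
apply: sreg_mulR; first exact: sreg_const.
by apply: sreg_prod => i; exact: H.
Qed.

Lemma mreg_adj b d n (F : 'cV[R]_d -> 'M[R]_n) x0 :
  mreg b F x0 -> mreg b (fun x => \adj (F x))%R x0.
Proof.
move=> H i j; apply: (@sreg_ext _ _ _ (fun x => cofactor (F x) j i)).
  by move=> x; rewrite mxE.
rewrite /cofactor; apply: sreg_mulR; first exact: sreg_const.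
apply: sreg_det => k l.
apply: (@sreg_ext _ _ _ (fun x => F x (lift j k) (lift i l))); first by move=> x; rewrite !mxE.
exact: H.
Qed.

Lemma entry2 p q (A B : 'M[R]_(p, q)) i j : Rabs (A i j - B i j) <= mnorm (A - B)%R.
Proof. have := entry_le (A - B)%R i j; rewrite !mxE; exact. Qed.

Lemma entry3 p q (A B C : 'M[R]_(p, q)) i j :
  Rabs (A i j - B i j - C i j) <= mnorm (A - B - C)%R.
Proof. have := entry_le (A - B - C)%R i j; rewrite !mxE; exact. Qed.

Definition K p q := INR p * INR q.
Lemma K_ge0 p q : 0 <= K p q.
Proof. rewrite /K; have := pos_INR p; have := pos_INR q; nra. Qed.

Lemma mx_small p q (M : 'M[R]_(p, q)) c :
  (forall i j, Rabs (M i j) <= c) -> mnorm M <= K p q * c.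
Proof. move=> H; have := mnorm_bound H; rewrite /K; lra. Qed.

Lemma Kdiv p q e : 0 < e -> 0 < e / (K p q + 1) /\ K p q * (e / (K p q + 1)) < e.
Proof.
move=> he; have hK := K_ge0 p q.
have h1 : 0 < e / (K p q + 1) by apply: Rdiv_lt_0_compat; lra.
split => //.
have h2 : (K p q + 1) * (e / (K p q + 1)) = e by field; lra.
lra.
Qed.

Lemma fchoice2 (A B C : Type) (P : A -> B -> C -> Prop) :
  (forall a b, exists c, P a b c) -> exists f : A -> B -> C, forall a b, P a b (f a b).
Proof.
move=> H.
exists (fun a b => proj1_sig (constructive_indefinite_description _ (H a b))).
move=> a b; exact: proj2_sig (constructive_indefinite_description _ (H a b)).
Qed.

Lemma nb_le d (x : 'cV[R]_d) P : nb x P -> exists r, 0 < r /\ forall y, dist y x <= r -> P y.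
Proof. move=> [e [he He]]; exists (e / 2); split; first lra; move=> y hy; apply: He; lra. Qed.

Lemma entries_of_frechet d p q (F : 'cV[R]_d -> 'M[R]_(p, q)) x D :
  frechet_at F x D -> forall i j, sfr (fun y => F y i j) x (fun h => D h i j).
Proof.
move=> [hD H] i j; split.
  by move=> a u v; rewrite hD !mxE.
move=> e he; have [del [hdel Hd]] := H e he; exists del; split => // y hy.
exact: Rle_trans (entry3 _ _ _ i j) (Hd y hy).
Qed.

Lemma frechet_of_entries d p q (F : 'cV[R]_d -> 'M[R]_(p, q)) x L :
  (forall i j, sfr (fun y => F y i j) x (L i j)) ->
  frechet_at F x (fun h => \matrix_(i, j) L i j h)%R.
Proof.
move=> H; split.
  by move=> a u v; apply/matrixP => i j; rewrite !mxE; case: (H i j) => hl _; rewrite hl.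
move=> e he; have [h1 h2] := Kdiv p q he.
have := nb_fin (fun i => nb_fin (fun j => (proj2 (H i j)) _ h1)).
move=> [del [hdel Hd]]; exists del; split => // y hy.
apply: Rle_trans (mx_small (_ : forall i j, _ <= e / (K p q + 1) * mnorm (y - x)%R)) _.
  move=> i j; have := Hd y hy i j; rewrite !mxE; exact.
have := mnorm_ge0 (y - x)%R; have := K_ge0 p q; nra.
Qed.

Lemma regular_mreg b d p q (F : 'cV[R]_d -> 'M[R]_(p, q)) x0 :
  regular b F x0 -> mreg b F x0.
Proof.
case: b => /= H i j.
- move=> e he; have [del [hdel Hd]] := H e he; exists del; split => // y hy.
  exact: Rle_lt_trans (entry2 _ _ i j) (Hd y hy).
- have [r [L [hr [hL Hr]]]] := H; exists L; split => //.
  exists r; split => // y hy.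
  by apply: Rle_trans (entry2 _ _ i j) (Hr y _); rewrite /dist in hy; lra.
- have [r [L [hr [hL Hr]]]] := H; exists L; split => //.
  exists r; split => // y z hy hz.
  exact: Rle_trans (entry2 _ _ i j) (Hr y z hy hz).
- have [D HD] := H; exists (fun h => D h i j); exact: entries_of_frechet.
- have [r [Df [hr [H1 H2]]]] := H; exists (fun x h => Df x h i j); split.
    by exists r; split => // y hy; exact: entries_of_frechet (H1 y hy) i j.
  move=> e he; have [del [hdel Hd]] := H2 e he; exists del; split => // y hy h.
  exact: Rle_trans (entry2 _ _ i j) (Hd y hy h).
Qed.

Lemma mreg_regular b d p q (F : 'cV[R]_d -> 'M[R]_(p, q)) x0 :
  mreg b F x0 -> regular b F x0.
Proof.
case: b => H /=.
- move=> e he; have [h1 h2] := Kdiv p q he.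
  have := nb_fin (fun i => nb_fin (fun j => H i j _ h1)).
  move=> [del [hdel Hd]]; exists del; split => // y hy.
  apply: Rle_lt_trans (mx_small (_ : forall i j, _ <= e / (K p q + 1))) h2.
  move=> i j; have := Hd y hy i j; rewrite !mxE => h; apply: Rlt_le; exact: h.
- have [C HC] := fchoice2 H.
  set Ct := sabs (\matrix_(i, j) C i j)%R.
  have hC : forall i j, C i j <= Ct.
    move=> i j; apply: Rle_trans (entry_le_sabs _ i j); rewrite mxE; exact: Rle_abs.
  have := nb_fin (fun i => nb_fin (fun j => proj2 (HC i j))).
  move=> /nb_le [r [hr Hr]]; exists r, (K p q * Ct); split => //; split.
    by apply: Rmult_le_pos; [exact: K_ge0|exact: sabs_ge0].
  move=> y hy.
  apply: Rle_trans (mx_small (_ : forall i j, _ <= Ct * mnorm (y - x0)%R)) _.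
    move=> i j; have := Hr y hy i j; rewrite !mxE => h.
    apply: Rle_trans h _; apply: Rmult_le_compat_r; [exact: mnorm_ge0|exact: hC].
  rewrite Rmult_assoc; exact: Rle_refl.
- have [C HC] := fchoice2 H.
  set Ct := sabs (\matrix_(i, j) C i j)%R.
  have hC : forall i j, C i j <= Ct.
    move=> i j; apply: Rle_trans (entry_le_sabs _ i j); rewrite mxE; exact: Rle_abs.
  have := nb2_fin (fun i => nb2_fin (fun j => proj2 (HC i j))).
  move=> [r [hr Hr]]; exists r, (K p q * Ct); split => //; split.
    by apply: Rmult_le_pos; [exact: K_ge0|exact: sabs_ge0].
  move=> y z hy hz.
  apply: Rle_trans (mx_small (_ : forall i j, _ <= Ct * mnorm (y - z)%R)) _.
    move=> i j; have := Hr y z hy hz i j; rewrite !mxE => h.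
    apply: Rle_trans h _; apply: Rmult_le_compat_r; [exact: mnorm_ge0|exact: hC].
  rewrite Rmult_assoc; exact: Rle_refl.
- have [L HL] := fchoice2 H; eexists; exact: frechet_of_entries HL.
- have [Du HD] := fchoice2 H.
  have := nb_fin (fun i => nb_fin (fun j => proj1 (HD i j))).
  move=> [r [hr Hr]]; exists r, (fun x h => \matrix_(i, j) Du i j x h)%R; split => //; split.
    by move=> y hy; apply: frechet_of_entries => i j; exact: Hr y hy i j.
  move=> e he; have [h1 h2] := Kdiv p q he.
  have := nb_fin (fun i => nb_fin (fun j => proj2 (HD i j) _ h1)).
  move=> [del [hdel Hd]]; exists del; split => // y hy h.
  apply: Rle_trans (mx_small (_ : forall i j, _ <= e / (K p q + 1) * mnorm h)) _.
    move=> i j; have := Hd y hy i j h; rewrite !mxE; exact.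
  have := mnorm_ge0 h; have := K_ge0 p q; nra.
Qed.

Definition sqv k (w : 'rV[R]_k) : R := (\sum_(i < k) w ord0 i * w ord0 i)%R.

Lemma sqv_ge0 k (w : 'rV[R]_k) : 0 <= sqv w.
Proof. apply: sum_ge0 => i; exact: sq_ge0. Qed.

Lemma sqv_gt0 k (w : 'rV[R]_k) : w != 0%R -> 0 < sqv w.
Proof.
move=> hw; case: (classic (exists i, w ord0 i <> 0)) => [[i hi]|hn].
  have h := @sum_term _ (index_enum 'I_k) (fun l => (w ord0 l * w ord0 l)%R) i (fun l => sq_ge0 _) (mem_index_enum i).
  have h2 : 0 < w ord0 i * w ord0 i by nra.
  exact: (Rlt_le_trans _ _ _ h2 h).
exfalso; move/negP: hw; apply; apply/eqP/matrixP => i j; rewrite (ord1 i) mxE.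
by apply: NNPP => hij; apply: hn; exists j.
Qed.

Lemma quad_aux k (w : 'rV[R]_k) : (w *m w^T)%R ord0 ord0 = sqv w.
Proof. by rewrite mxE; apply: eq_bigr => i _; rewrite mxE. Qed.

Lemma quad m n (a : 'M[R]_(m, n)) t c (v : 'rV[R]_m) :
  (v *m (t *: (a *m a^T) + c%:M) *m v^T)%R ord0 ord0 = t * sqv (v *m a)%R + c * sqv v.
Proof.
rewrite mulmxDr mulmxDl -scalemxAr mul_mx_scalar -!scalemxAl.
have e1 : (v *m (a *m a^T) *m v^T = (v *m a) *m (v *m a)^T)%R by rewrite trmx_mul !mulmxA.
rewrite e1 -(quad_aux (v *m a)%R) -(quad_aux v).
set P := ((v *m a) *m (v *m a)^T)%R; set Q := (v *m v^T)%R.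
by rewrite !mxE.
Qed.

Lemma det_nz m n (a : 'M[R]_(m, n)) t c : 0 <= t -> 0 < c ->
  (\det (t *: (a *m a^T) + c%:M))%R <> 0.
Proof.
move=> ht hc /eqP /det0P [v hv hvA].
have := quad a t c v; rewrite hvA mul0mx mxE => h.
have := sqv_gt0 hv; have := sqv_ge0 (v *m a)%R.
move=> h1 h2.
have h3 := Rmult_le_pos _ _ ht h1; have h4 := Rmult_lt_0_compat _ _ hc h2.
exact: (Rlt_not_eq _ _ (Rplus_le_lt_0_compat _ _ h3 h4) h).
Qed.

Lemma cont_ext (f g : R -> R) : (forall x, f x = g x) -> continuity g -> continuity f.
Proof. by move=> H; rewrite (functional_extensionality f g H). Qed.

Lemma cont_const (c : R) : continuity (fun _ => c).
Proof. by apply: continuity_const => x y. Qed.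

Lemma cont_add (f g : R -> R) : continuity f -> continuity g -> continuity (fun x => f x + g x).
Proof. exact: continuity_plus. Qed.

Lemma cont_mul (f g : R -> R) : continuity f -> continuity g -> continuity (fun x => f x * g x).
Proof. exact: continuity_mult. Qed.

Lemma cont_mulR (f g : R -> R) : continuity f -> continuity g -> continuity (fun x => (f x * g x)%R).
Proof. exact: continuity_mult. Qed.

Lemma cont_id : continuity (fun x => x).
Proof. exact: (derivable_continuous _ derivable_id). Qed.

Lemma cont_sum (I : Type) (r : seq I) (F : I -> R -> R) :
  (forall i, continuity (F i)) -> continuity (fun s => (\sum_(i <- r) F i s)%R).
Proof.
move=> H; elim: r => [|a r IH].
  by apply: (@cont_ext _ (fun _ => 0)) => [x|]; [rewrite big_nil|exact: cont_const].
apply: (@cont_ext _ (fun x => F a x + (\sum_(i <- r) F i x)%R)).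
  by move=> x; rewrite big_cons.
exact: cont_add.
Qed.

Lemma cont_prod (I : Type) (r : seq I) (F : I -> R -> R) :
  (forall i, continuity (F i)) -> continuity (fun s => (\prod_(i <- r) F i s)%R).
Proof.
move=> H; elim: r => [|a r IH].
  by apply: (@cont_ext _ (fun _ => 1)) => [x|]; [rewrite big_nil|exact: cont_const].
apply: (@cont_ext _ (fun x => F a x * (\prod_(i <- r) F i x)%R)).
  by move=> x; rewrite big_cons.
exact: cont_mul.
Qed.

Lemma cont_det k (F : R -> 'M[R]_k) :
  (forall i j, continuity (fun s => F s i j)) -> continuity (fun s => \det (F s))%R.
Proof.
move=> H; rewrite /determinant; apply: cont_sum => s.
apply: cont_mulR; first exact: cont_const.
by apply: cont_prod => i; exact: H.
Qed.

Lemma pow_gt0 (t : R) k : 0 < t -> 0 < (t ^+ k)%R.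
Proof.
move=> ht; elim: k => [|k IH]; first by rewrite expr0; rR; lra.
rewrite exprS; exact: Rmult_lt_0_compat.
Qed.

Lemma pow_ge0 (t : R) k : 0 <= t -> 0 <= (t ^+ k)%R.
Proof.
move=> ht; elim: k => [|k IH]; first by rewrite expr0; rR; lra.
rewrite exprS; exact: Rmult_le_pos.
Qed.

Lemma det_gram_ge0 m n (a : 'M[R]_(m, n)) : 0 <= (\det (a *m a^T))%R.
Proof.
set S := (a *m a^T)%R.
pose psi s := (\det (s *: S + 1%:M))%R.
have cpsi : continuity psi.
  apply: cont_det => i j.
  apply: (@cont_ext _ (fun s => s * S i j + (1%:M : 'M[R]_m)%R i j)).
    by move=> s; rewrite !mxE.
  apply: cont_add; last exact: cont_const.
  apply: cont_mul; [exact: cont_id|exact: cont_const].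
have psi0 : psi 0 = 1 by rewrite /psi scale0r add0r det1.
have psinz : forall s, 0 <= s -> psi s <> 0.
  by move=> s hs; apply: det_nz => //; rR; lra.
have psipos : forall s, 0 <= s -> 0 < psi s.
  move=> s hs; case: (Rtotal_order (psi s) 0) => [hneg|[h0|//]].
  - have hs' : 0 < s.
      case: (Rle_lt_or_eq_dec _ _ hs) => // e; rewrite -e psi0 in hneg; lra.
    have [z [[hz1 hz2] hz]] := IVT (fun s => - psi s) 0 s
      (continuity_opp _ cpsi) hs' ltac:(cbv beta; rewrite psi0; lra) ltac:(cbv beta; lra).
    exfalso; apply: (psinz z hz1); lra.
  - by exfalso; exact: psinz h0.
pose phi t := (\det (S + t *: 1%:M))%R.
have cphi : continuity phi.
  apply: cont_det => i j.
  apply: (@cont_ext _ (fun s => S i j + s * (1%:M : 'M[R]_m)%R i j)).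
    by move=> s; rewrite !mxE.
  apply: cont_add; first exact: cont_const.
  apply: cont_mul; [exact: cont_id|exact: cont_const].
have phipos : forall t, 0 < t -> 0 < phi t.
  move=> t ht.
  have -> : phi t = (t ^+ m * psi (/ t))%R.
    rewrite /phi /psi -detZ scalerDr scalerA.
    by rewrite (_ : (t * / t)%R = 1%R) ?scale1r //; rR; field; lra.
  apply: Rmult_lt_0_compat; first exact: pow_gt0.
  apply: psipos; apply: Rlt_le; exact: Rinv_0_lt_compat.
have phi0 : phi 0 = (\det S)%R by rewrite /phi scale0r addr0.
rewrite -phi0; case: (Rle_or_lt 0 (phi 0)) => // hneg.
have [alp [halp Hal]] := cphi 0 (- phi 0) ltac:(lra).
have hd : D_x no_cond 0 (alp / 2) /\ Rdist (alp / 2) 0 < alp.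
  split; first by split => //; apply: Rlt_not_eq; lra.
  rewrite /Rdist Rminus_0_r Rabs_right; lra.
have := Hal (alp / 2) hd.
rewrite /= /Rdist => h.
have := phipos (alp / 2) ltac:(lra).
have := Rle_abs (phi (alp / 2) - phi 0); lra.
Qed.

Definition Dd m n nu (a : 'M[R]_(m, n)) : R := ((\det (a *m a^T)) ^+ nu)%R.
Definition Mm m n mu nu (a : 'M[R]_(m, n)) : 'M[R]_m :=
  (Dd nu a *: (a *m a^T) + (mu * mu)%:M)%R.
Definition Gf m n mu nu (a : 'M[R]_(m, n)) : 'M[R]_(n, m) :=
  (Dd nu a *: (a^T *m ((\det (Mm mu nu a))^-1 *: \adj (Mm mu nu a))))%R.

Lemma Dd_ge0 m n nu (a : 'M[R]_(m, n)) : 0 <= Dd nu a.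
Proof. apply: pow_ge0; exact: det_gram_ge0. Qed.

Lemma Mm_det m n mu nu (a : 'M[R]_(m, n)) : 0 < mu -> (\det (Mm mu nu a))%R <> 0.
Proof. move=> hmu; apply: det_nz; [exact: Dd_ge0|rR; nra]. Qed.

Lemma unit_of_det k (N : 'M[R]_k) : (\det N)%R <> 0 -> N \in unitmx.
Proof. by move=> h; rewrite unitmxE unitfE; apply/eqP. Qed.

Lemma pinv_inv k (N : 'M[R]_k) : N \in unitmx -> pinv N = invmx N.
Proof.
move=> hN.
have P : penrose N (invmx N).
  split.
  - by rewrite mulmxV // mul1mx.
  - by rewrite mulVmx // mul1mx.
  - by rewrite mulmxV // trmx1.
  - by rewrite mulVmx // trmx1.
rewrite /pinv; have := epsilon_spec (inhabits 0%R) (penrose N) (ex_intro _ _ P).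
set X := epsilon _ _; case=> h1 _ _ _.
have : (invmx N *m (N *m X *m N) *m invmx N = invmx N *m N *m invmx N)%R by rewrite h1.
by rewrite !mulmxA mulVmx // mul1mx -!mulmxA mulmxV // mulmx1 mul1mx.
Qed.

Lemma damped_eq d m n mu nu (A : 'cV[R]_d -> 'M[R]_(m, n)) x : 0 < mu ->
  damped_pinv (A x) (lam_fun mu nu A x) = Gf mu nu (A x).
Proof.
move=> hmu; rewrite /lam_fun.
have hD0 := Dd_ge0 nu (A x).
case: Rlt_dec => hD /=.
- have hDp : 0 < Dd nu (A x) := hD.
  change (((A x)^T *m pinv (A x *m (A x)^T + (Rmult (sqrt (Rdiv (Rmult mu mu) (Dd nu (A x))))
     (sqrt (Rdiv (Rmult mu mu) (Dd nu (A x)))))%:M)) = Gf mu nu (A x))%R.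
  clear hD; set a := A x in hDp hD0 *; set D := Dd nu a in hDp hD0 *; move: hDp => hD.
  have hq : 0 <= mu * mu / D by apply: Rlt_le; apply: Rdiv_lt_0_compat => //; nra.
  rewrite (sqrt_sqrt _ hq).
  set N := (a *m a^T + (Rdiv (Rmult mu mu) D)%:M)%R.
  have hNd : (\det N)%R <> 0.
    rewrite /N -[(a *m a^T)%R]scale1r; apply: det_nz; [rR; lra|].
    by apply: Rdiv_lt_0_compat => //; nra.
  have hN := unit_of_det hNd.
  have eM : Mm mu nu a = (D *: N)%R.
    rewrite /Mm /N scalerDr scale_scalar_mx; congr (_ + _)%R; congr (_%:M)%R.
    by rR; field; lra.
  have hMd := @Mm_det _ _ mu nu a hmu.
  have hM := unit_of_det hMd.
  rewrite pinv_inv // /Gf.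
  have -> : ((\det (Mm mu nu a))^-1 *: \adj (Mm mu nu a))%R = invmx (Mm mu nu a).
    by rewrite /invmx hM.
  rewrite eM invmxZ; last by rewrite -eM.
  rewrite -scalemxAr scalerA (_ : (D * D^-1)%R = 1%R) ?scale1r //.
  by rR; field; lra.
- have e : Dd nu (A x) = 0.
    by case: (Rle_lt_or_eq_dec _ _ hD0) => // h; exfalso; apply: hD; exact: h.
  by rewrite /Gf e scale0r.
Qed.

Theorem lemma8 (b : reg_class) (d m n : nat) (x0 : 'cV[R]_d)
  (A : 'cV[R]_d -> 'M[R]_(m, n)) (mu : R) (nu : nat) :
  regular b A x0 -> Rlt 0 mu ->
  regular b (fun x => damped_pinv (A x) (lam_fun mu nu A x)) x0.
Proof.
move=> HA hmu.
have -> : (fun x => damped_pinv (A x) (lam_fun mu nu A x)) = (fun x => Gf mu nu (A x)).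
  by apply: functional_extensionality => x; exact: damped_eq.
apply: mreg_regular.
have MA := regular_mreg HA.
have MS : mreg b (fun x => A x *m (A x)^T)%R x0 := mreg_mul MA (mreg_tr MA).
have SD : sreg b (fun x => Dd nu (A x)) x0 := sreg_exp nu (sreg_det MS).
have MM : mreg b (fun x => Mm mu nu (A x)) x0 := mreg_add (mreg_scale SD MS) (mreg_const _ _ _).
apply: (mreg_scale SD); apply: (mreg_mul (mreg_tr MA)); apply: mreg_scale (mreg_adj MM).
exact: (sreg_invR (sreg_det MM) (@Mm_det _ _ mu nu (A x0) hmu)).
Qed.
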